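(* For every $n\ge 0$, the element $MC_n(\xi)=\sum_{|\alpha|=n}\mu(-(n+1);\overline\alpha)\,r_*[\mathbb{C}P^{n-|\alpha|'}]\,a^\alpha$ equals \[ \sum_{k=0}^n r_*[\mathbb{C}P^{n-k}]\cdot\Big(a_0^{2n+1}\big(\textstyle\sum_{i\ge0}a_iz^i\big)^{-(n+1)}\Big)[z^k], \] where $S(z)[z^k]$ denotes the coefficient of $z^k$ in the formal power series $S(z)$.
   Context: Here $a_0,a_1,\ldots$ are the elements of $BP^*\llbracket\xi\rrbracket$ defined by $\prod_{i=0}^{p-1}([i]\xi+_Fx)=\sum_{i\ge0}a_ix^{i+1}$ for the $BP$ formal group law $F$ (in particular $a_0=\chi=\prod_{i=1}^{p-1}[i]\xi$, which is not a zero divisor after reduction modulo $\langle p\rangle\xi$), $r_*[\mathbb{C}P^m]\in BP^{-2m}$ is the image of the class of $\mathbb{C}P^m$ under Quillen's map $r\colon MU_{(p)}\to BP$. Multi-indices $\alpha=(\alpha_0,\alpha_1,\ldots)$ of nonnegative integers, almost all zero; $\overline\alpha=(\alpha_1,\alpha_2,\ldots)$, $|\alpha|=\sum\alpha_i$, $|\alpha|'=\sum i\alpha_i$, $a^\alpha=\prod a_i^{\alpha_i}$. For an integer $m$, $\mu(m;\overline\alpha)$ is defined by $(1+b_1+b_2+\cdots)^m=\sum_{\overline\alpha}\mu(m;\overline\alpha)b_1^{\alpha_1}b_2^{\alpha_2}\cdots$. The coefficient of $z^k$ for $k\le n$ in $a_0^{2n+1}(\sum a_iz^i)^{-(n+1)}$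 is a polynomial in the $a_i$. *)

(* Defs.v *)
From HB Require Import structures.
From mathcomp Require Import all_boot all_order all_algebra.
From mathcomp Require Import fraction.
From mathcomp Require Import mpoly.
Set Implicit Arguments. Unset Strict Implicit. Unset Printing Implicit Defensive.
Import Order.TTheory GRing.Theory Num.Theory.
Local Open Scope ring_scope.

(* mu(m; abar) for abar = (alpha_1, ..., alpha_K) (coordinate i of abar is
   alpha_(i+1)): the coefficient of b_1^alpha_1 ... b_K^alpha_K in
   (1 + b_1 + ... + b_K)^m.  For m < 0 the power series (1+B)^(-1),
   B = b_1 + ... + b_K, is computed modulo terms of total degree > |abar|
   as the truncated geometric series sum_(j <= |abar|) (-B)^j, which does not
   affect the coefficient of a monomial of total degree |abar|. *)
Definition mu (K : nat) (m : int) (abar : 'I_K -> nat) : int :=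
  let B : {mpoly int[K]} := \sum_(i < K) 'X_i in
  let D := (\sum_(i < K) abar i)%N in
  let S := if (0 <= m)%R then (1 + B) ^+ `|m|%N
           else (\sum_(j < D.+1) (- B) ^+ j) ^+ `|m|%N in
  S@_[multinom abar i | i < K].

(* Multi-indices alpha = (alpha_0, ..., alpha_n) with |alpha| = n and
   |alpha|' <= n (all other alpha contribute 0 since [CP^m] = 0 for m < 0,
   and alpha_i = 0 for i > n is forced by |alpha|' <= n). *)
Definition abs_mi (n : nat) (al : {ffun 'I_n.+1 -> 'I_n.+1}) : nat :=
  (\sum_(i < n.+1) al i)%N.
Definition abs'_mi (n : nat) (al : {ffun 'I_n.+1 -> 'I_n.+1}) : nat :=
  (\sum_(i < n.+1) i * al i)%N.

(* MC_n(xi) = sum_(|alpha| = n) mu(-(n+1); alpha-bar) r_*[CP^(n - |alpha|')] a^alpha,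
   where cp m stands for r_*[CP^m]. *)
Definition MC (R : comRingType) (a cp : nat -> R) (n : nat) : R :=
  \sum_(al : {ffun 'I_n.+1 -> 'I_n.+1} |
          (abs_mi al == n) && (abs'_mi al <= n)%N)
     ((mu (- (n.+1)%:Z) (fun i : 'I_n => nat_of_ord (al (lift ord0 i))))%:~R
      * cp (n - abs'_mi al)%N
      * \prod_(i < n.+1) a i ^+ al i).

Definition trunc_inv (F : fieldType) (N : nat) (P Q : {poly F}) : bool :=
  'X^N %| P * Q - 1.

(* Main.v *)
Require Import Defs.
From HB Require Import structures.
From mathcomp Require Import all_boot all_order all_algebra.
From mathcomp Require Import fraction mpoly.
From mathcomp Require Import zify ring.
Import GRing.Theory.
Local Open Scope ring_scope.
Set Warnings "-notation-overridden,-ambiguous-paths,-notation-incompatible-prefix,-deprecated".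
Lemma homog_coef0 K e (p q : {mpoly int[K]}) (m : 'X_{1..K}) :
  p \is e.-homog -> (mdeg m < e)%N -> (p * q)@_m = 0.
Proof.
move=> hp lt; rewrite mcoeffM big1 // => -[k1 k2] /= mE.
rewrite (dhomog_nemf_coeff hp) ?mul0r //.
move: mE; set a := (k1 : 'X_{1..K}); set b := (k2 : 'X_{1..K}) => /eqP mE.
have h : (mdeg a <= mdeg m)%N by rewrite mE mdegD leq_addr.
apply/negP => /eqP he; move: h; by rewrite he leqNgt lt.

Qed.

Lemma B_homog K : (\sum_(i < K) 'X_i : {mpoly int[K]}) \is 1.-homog.
Proof.
apply: (big_ind (fun p : {mpoly int[K]} => p \is 1.-homog)); first exact: dhomog0.
  by move=> x y; apply: dhomogD.
by move=> i _; rewrite dhomogX mdeg_eq1; apply/existsP; exists i.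
Qed.

Lemma trunc_diff K (B : {mpoly int[K]}) D N : (D <= N)%N ->
  exists W, \sum_(j < N.+1) (- B) ^+ j - \sum_(j < D.+1) (- B) ^+ j = (-B) ^+ D.+1 * W.
Proof.
elim: N => [|N IH]; first by rewrite leqn0 => /eqP->; exists 0; rewrite subrr mulr0.
rewrite leq_eqVlt => /orP[/eqP->|]; first by exists 0; rewrite subrr mulr0.
move=> hDN; have [W HW] := IH hDN; exists (W + (-B) ^+ (N - D)).
rewrite big_ord_recr /= addrAC HW mulrDr -exprD; congr (_ + _ ^+ _).
lia.
Qed.

Lemma trunc_coef K c D N (m : 'X_{1..K}) : mdeg m = D -> (D <= N)%N ->
  let B : {mpoly int[K]} := \sum_(i < K) 'X_i in
  ((\sum_(j < D.+1) (- B) ^+ j) ^+ c)@_m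
  = ((\sum_(j < N.+1) (- B) ^+ j) ^+ c)@_m.
Proof.
move=> hm hDN B; apply/eqP; rewrite eq_sym -subr_eq0 -mcoeffB subrXX.
have [W ->] := trunc_diff _ B _ _ hDN.
rewrite -mulrA (@homog_coef0 _ D.+1) //; last by rewrite hm.
have hB : - B \is 1.-homog by rewrite dhomogN; exact: B_homog.
by have := dhomogMn D.+1 hB; rewrite mul1n.
Qed.

Definition Sn K n : {mpoly int[K]} :=
  (\sum_(j < n.+1) (- \sum_(i < K) 'X_i) ^+ j) ^+ n.+1.

Lemma mu_eq K n (abar : 'I_K -> nat) : (\sum_i abar i <= n)%N ->
  mu (- (n.+1)%:Z) abar = (Sn K n)@_[multinom abar i | i < K].
Proof.
move=> hs; rewrite /mu /Sn /=.
apply: trunc_coef => //.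
by rewrite mdegE; apply: eq_bigr => i _; rewrite mnmE.
Qed.
Lemma sum_reindex (V : nmodType) (T : eqType) (I : finType) (s : seq T) (P : pred I)
  (g : I -> T) (Fn : T -> V) :
  uniq s -> {in P &, injective g} ->
  (forall i, P i -> g i \notin s -> Fn (g i) = 0) ->
  (forall j, j \in s -> Fn j != 0 -> exists2 i, P i & j = g i) ->
  \sum_(j <- s) Fn j = \sum_(i | P i) Fn (g i).
Proof.
move=> us ig H3 H4.
rewrite (bigID (fun i => g i \in s)) /= [X in _ + X]big1 ?addr0; last first.
  by move=> i /andP[Pi ni]; exact: H3.
rewrite -[in RHS]big_filter.
set r := filter _ _.
have -> : \sum_(i <- r) Fn (g i) = \sum_(j <- map g r) Fn j by rewrite big_map.
set t := map g r.
have tins : forall j, j \in t -> j \in s.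
  by move=> j /mapP[i]; rewrite mem_filter => /andP[/andP[_ ?] _] ->.
rewrite big_seq (bigID (fun j => j \in t)) /= [X in _ + X]big1 ?addr0; last first.
  move=> j /andP[js jnt]; apply/eqP; apply: contraNT jnt => nz.
  have [i Pi ej] := H4 j js nz; apply/mapP; exists i => //.
  by rewrite mem_filter Pi -ej js mem_index_enum.
rewrite -big_filter; apply: perm_big; apply: uniq_perm.
- exact: filter_uniq.
- rewrite map_inj_in_uniq; first by rewrite filter_uniq // index_enum_uniq.
  move=> x y; rewrite !mem_filter => /andP[/andP[Px _] _] /andP[/andP[Py _] _].
  exact: ig.
- by move=> j; rewrite mem_filter; apply/andP/idP => [[/andP[]]|jt]//; rewrite jt tins.
Qed.

Section PolyPart.
Variables (F : fieldType) (c : nat -> F) (n : nat).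
Hypothesis c0 : c 0%N != 0.

Definition dd (i : 'I_n) : F := c i.+1 / c 0%N.
Definition hh (i : 'I_n) : {poly F} := (dd i)%:P * 'X^(i.+1).
Definition Bz : {poly F} := \sum_(i < n) hh i.
Definition Tz : {poly F} := \sum_(j < n.+1) (- Bz) ^+ j.
Definition Gz : {poly F} := (c 0%N)^-1%:P * Tz.
Definition Pz : {poly F} := \poly_(i < n.+1) c i.

Lemma Pz_eq : Pz = (c 0%N)%:P * (1 + Bz).
Proof.
rewrite /Pz poly_def big_ord_recl /= expr0 mulrDr mulr1 alg_polyC.
congr (_ + _); rewrite /Bz mulr_sumr; apply: eq_bigr => i _ /=.
rewrite /hh /dd mulrA -polyCM mulrCA mulfV // mulr1 mul_polyC.
by rewrite /bump leq0n.

Qed.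

Lemma Bz_X : Bz = 'X * \sum_(i < n) (dd i)%:P * 'X^i.
Proof.
rewrite /Bz mulr_sumr; apply: eq_bigr => i _.
by rewrite /hh exprS mulrCA.
Qed.

Lemma Gz_div : 'X^(n.+1) %| Pz * Gz - 1.
Proof.
have -> : Pz * Gz - 1 = - (- Bz) ^+ n.+1.
  rewrite Pz_eq /Gz mulrCA !mulrA -polyCM mulVf // mul1r /Tz.
  have h := subrX1 (- Bz) n.+1.
  have -> : (1 + Bz) = - (- Bz - 1) by rewrite opprB opprK.
  by rewrite mulNr -h opprB addrAC subrr add0r.
rewrite dvdpNr; apply: dvdp_exp2r; rewrite Bz_X -mulrN; exact: dvdp_mulIl.
Qed.

Lemma Q_coef (Q : {poly F}) : trunc_inv n.+1 Pz Q ->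
  forall k, (k < n.+1)%N -> (Q ^+ n.+1)`_k = (Gz ^+ n.+1)`_k.
Proof.
rewrite /trunc_inv => hQ k hk.
have hd : 'X^(n.+1) %| Q - Gz.
  have -> : Q - Gz = - (Q * (Pz * Gz - 1)) + Gz * (Pz * Q - 1).
    by ring.
  by apply: dvdp_add; [rewrite dvdpNr|]; apply: dvdp_mull; [exact: Gz_div|exact: hQ].
have hd2 : 'X^(n.+1) %| Q ^+ n.+1 - Gz ^+ n.+1 by rewrite subrXX; exact: dvdp_mulr.
have [qq hqq] := dvdpP _ _ hd2.
apply/eqP; rewrite -subr_eq0 -coefB hqq coefMXn hk //.
Qed.

Definition wt (m : 'X_{1..n}) : nat := (\sum_(i < n) i.+1 * m i)%N.

Lemma mmap_Sn : mmap intr hh (Sn n n) = Tz ^+ n.+1.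
Proof.
rewrite /Sn rmorphXn rmorph_sum; congr (_ ^+ _); apply: eq_bigr => j _.
rewrite rmorphXn rmorphN rmorph_sum; congr ((- _) ^+ _); apply: eq_bigr => i _.
by rewrite /= mmapX mmap1U.
Qed.

Lemma Tz_coef k : (Tz ^+ n.+1)`_k = \sum_(m <- msupp (Sn n n))
   ((Sn n n)@_m)%:~R * (\prod_i dd i ^+ m i) * (k == wt m)%:R.
Proof.
rewrite -mmap_Sn /mmap coef_sum; apply: eq_bigr => m _.
rewrite /mmap1 /hh.
set D := \prod_i dd i ^+ m i.
under eq_bigr => i _ do rewrite exprMn -exprM.
rewrite big_split /= prodrXr.
under eq_bigr => i _ do rewrite -(rmorphXn polyC).
rewrite -(rmorph_prod polyC) [in LHS]mulrzl coefMrz coefCM coefXn -mulrzl mulrA /D.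
congr (_ * _ * (_ == _)%:R); rewrite /wt; apply: eq_bigr => i _; by rewrite mulnC.
Qed.

Definition gm (al : {ffun 'I_n.+1 -> 'I_n.+1}) : 'X_{1..n} :=
  [multinom (nat_of_ord (al (lift ord0 i))) | i < n].

Lemma abs_split (al : {ffun 'I_n.+1 -> 'I_n.+1}) :
  abs_mi al = (al ord0 + \sum_(i < n) al (lift ord0 i))%N.
Proof. by rewrite /abs_mi big_ord_recl. Qed.

Lemma mdeg_gm al : mdeg (gm al) = (\sum_(i < n) al (lift ord0 i))%N.
Proof. by rewrite mdegE; apply: eq_bigr => i _; rewrite mnmE. Qed.

Lemma wt_gm al : wt (gm al) = abs'_mi al.
Proof.
rewrite /abs'_mi big_ord_recl /= mul0n add0n /wt.
by apply: eq_bigr => i _; rewrite mnmE /bump leq0n.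
Qed.

Lemma prod_gm al : abs_mi al = n ->
  c 0%N ^+ n * \prod_i dd i ^+ gm al i = \prod_(i < n.+1) c i ^+ al i.
Proof.
move=> ha; rewrite big_ord_recl /=.
have -> : c 0%N ^+ n = c 0%N ^+ al ord0 * c 0%N ^+ (\sum_(i < n) al (lift ord0 i))
  by rewrite -exprD -abs_split ha.
rewrite -mulrA; congr (_ * _).
rewrite /gm /dd.
under eq_bigr => i _ do rewrite mnmE exprMn.
rewrite big_split /= prodrXr mulrCA exprVn mulfV ?expf_neq0 // mulr1.
by apply: eq_bigr => i _; rewrite /bump leq0n.
Qed.

Lemma goal_k (Q : {poly F}) : trunc_inv n.+1 Pz Q -> forall k, (k < n.+1)%N ->
  c 0%N ^+ (2 * n).+1 * (Q ^+ n.+1)`_k =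
  \sum_(al : {ffun 'I_n.+1 -> 'I_n.+1} | (abs_mi al == n) && (abs'_mi al == k))
     (mu (- (n.+1)%:Z) (fun i : 'I_n => nat_of_ord (al (lift ord0 i))))%:~R
     * \prod_(i < n.+1) c i ^+ al i.
Proof.
move=> hQ k hk; rewrite Q_coef // /Gz exprMn -(rmorphXn polyC) coefCM Tz_coef.
rewrite mulrA (_ : c 0%N ^+ _ * _ = c 0%N ^+ n); last first.
  rewrite exprVn (_ : (2 * n).+1 = n + n.+1)%N ?exprD ?mulfK ?expf_neq0 //; lia.
rewrite mulr_sumr.
rewrite (@sum_reindex _ _ _ _ (fun al => (abs_mi al == n) && (abs'_mi al == k)) gm
   (fun m => c 0%N ^+ n * (((Sn n n)@_m)%:~R * (\prod_i dd i ^+ m i) * (k == wt m)%:R))).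
- apply: eq_bigr => al /andP[/eqP ha /eqP hb].
  rewrite wt_gm hb eqxx mulr1 mulrCA prod_gm // (@mu_eq _ n) //.
  by apply: (leq_trans (leq_addl (al ord0) _)); rewrite -abs_split ha.
- exact: msupp_uniq.
- move=> a1 a2 /andP[/eqP h1 _] /andP[/eqP h2 _] e.
  have ei : forall i, nat_of_ord (a1 (lift ord0 i)) = a2 (lift ord0 i).
    by move=> i; have := congr1 (fun m : 'X_{1..n} => m i) e; rewrite /gm !mnmE.
  have hs : (\sum_(i < n) a1 (lift ord0 i) = \sum_(i < n) a2 (lift ord0 i))%N.
    by apply: eq_bigr => i _; rewrite ei.
  apply/ffunP => j; apply: val_inj.
  case: (unliftP ord0 j) => [i ->|->]; first exact: ei.
  move: h1 h2; rewrite !abs_split hs => h1 h2.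
  apply/eqP; rewrite -(eqn_add2r (\sum_(i < n) a2 (lift ord0 i))) h1 h2 //.
- by move=> al _ /memN_msupp_eq0 ->; rewrite rmorph0 !mul0r mulr0.
- move=> j _ nz.
  case: (k =P wt j) nz => [hkw _|_]; last by rewrite mulr0 mulr0 eqxx.
  have hdeg : (mdeg j <= k)%N.
    rewrite hkw mdegE /wt; apply: leq_sum => i _; exact: leq_pmull.
  have hji : forall i, (j i < n.+1)%N.
    move=> i; apply: (leq_ltn_trans _ hk); apply: (leq_trans _ hdeg).
    by rewrite mdegE (bigD1 i) //= leq_addr.
  pose al : {ffun 'I_n.+1 -> 'I_n.+1} := [ffun x : 'I_n.+1 => inord
     (match unlift ord0 x with Some i => j i | None => (n - mdeg j)%N end)].
  have hal_lift : forall i, nat_of_ord (al (lift ord0 i)) = j i.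
    by move=> i; rewrite ffunE liftK inordK.
  have hal0 : nat_of_ord (al ord0) = (n - mdeg j)%N.
    by rewrite ffunE unlift_none inordK // ltnS leq_subr.
  have hg : j = gm al by apply/mnmP => i; rewrite /gm mnmE hal_lift.
  exists al => //; apply/andP; split; apply/eqP.
    rewrite abs_split hal0 -mdeg_gm -hg subnK //; exact: leq_trans hdeg _.
  by rewrite -wt_gm -hg.
Qed.
End PolyPart.

Theorem proposition5p7 (R : idomainType) (a cp : nat -> R) (n : nat) :
  a 0%N != 0 ->
  forall Q : {poly {fraction R}},
    trunc_inv n.+1 (\poly_(i < n.+1) tofrac (a i)) Q ->
    tofrac (MC a cp n) =
    \sum_(k < n.+1)
       tofrac (cp (n - k)%N) * ((tofrac (a 0%N)) ^+ (2 * n).+1 * (Q ^+ n.+1)`_k).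
Proof.
move=> ha0 Q hQ.
have c0 : tofrac (a 0%N) != 0 by rewrite tofrac_eq0.
under eq_bigr => k _ do rewrite (@goal_k _ (fun i => tofrac (a i)) n c0 Q hQ k (ltn_ord k)) mulr_sumr.
rewrite /MC rmorph_sum.
rewrite (@partition_big _ _ _ _ _ _ _ (fun al : {ffun 'I_n.+1 -> 'I_n.+1} => (inord (abs'_mi al) : 'I_n.+1)) xpredT); last by [].
apply: eq_bigr => k _.
apply: eq_big => [al|al].
  rewrite -andbA; congr (_ && _).
  case: (leqP (abs'_mi al) n) => h.
    rewrite andTb; apply/eqP/eqP => [<-|->]; first by rewrite inordK.
    exact: inord_val.
  rewrite andFb; apply/esym/eqP => e; move: (ltn_ord k); rewrite -e ltnS leqNgt h //.
move=> /andP[/andP[_ hle] /eqP hk].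
have -> : abs'_mi al = k by rewrite -hk inordK.
rewrite rmorphM rmorphM rmorph_int rmorph_prod /=.
under eq_bigr => i _ do rewrite rmorphXn.
by rewrite mulrCA mulrA.
Qed.
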